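(* Let $(J,F,Y)$ be a pullback triple with Hilbert spaces $\mathcal H,\mathcal X,\mathcal E$. Then: (i) the inverse $Y^{-1}:\mathcal R(Y)\subset\mathcal X\to\mathcal H$ is closable and $J=\overline{Y^{-1}}$; (ii) $Y$ is closable if and only if $J$ is injective, and in this case $\overline{Y}=J^{-1}$; (iii) $Y$ is bounded if and only if $J$ is an isomorphism.
   Context: For Hilbert spaces $\mathcal H,\mathcal X,\mathcal E$, a pullback triple $(J,F,Y)$ consists of operators $J:\mathcal X\to\mathcal H$, $F:\mathcal X\to\mathcal E$, $Y:\mathcal H\to\mathcal X$ such that: $J,F$ are bounded with dense range; $Y$ is a completion operator (densely defined injective linear map with dense range, not necessarily closable); $\|u\|_{\mathcal X}^2=\|Ju\|^2_{\mathcal H}+\|Fu\|_{\mathcal E}^2$ for all $u\in\mathcal X$; and $JYf=f$ for all $f\in\mathcal D(Y)$. *)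

(* Defs.v *)
From HB Require Import structures.
From mathcomp Require Import all_boot all_order all_algebra.
From mathcomp Require Import all_classical all_reals all_analysis.
Set Implicit Arguments. Unset Strict Implicit. Unset Printing Implicit Defensive.
Import Order.TTheory GRing.Theory Num.Theory.
Import numFieldNormedType.Exports.
Local Open Scope classical_set_scope.
Local Open Scope ring_scope.

Definition is_inner_product (K : numClosedFieldType) (V : normedModType K)
  (ip : V -> V -> K) : Prop :=
  [/\ forall (a : K) (x y z : V), ip (a *: x + y) z = a * ip x z + ip y z,
      forall x y : V, ip y x = (ip x y)^* &
      forall x : V, `|x| ^+ 2 = ip x x].

Definition is_hilbert (K : numClosedFieldType) (V : completeNormedModType K)
  (ip : V -> V -> K) : Prop := is_inner_product ip.

Definition is_subspace (K : numDomainType) (V : lmodType K) (D : set V) : Prop :=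
  [/\ D 0, forall x y, D x -> D y -> D (x + y) & forall (a : K) x, D x -> D (a *: x)].

Definition linear_on (K : numDomainType) (V W : lmodType K) (D : set V) (Y : V -> W)
  : Prop := forall (a : K) x y, D x -> D y -> Y (a *: x + y) = a *: Y x + Y y.

Definition completion_operator (K : numFieldType) (H X : normedModType K)
  (D : set H) (Y : H -> X) : Prop :=
  [/\ is_subspace D, linear_on D Y, dense D,
      (forall f g, D f -> D g -> Y f = Y g -> f = g) & dense (Y @` D)].

Definition bounded_dense_range (K : numFieldType) (U V : normedModType K)
  (T : {linear U -> V}) : Prop := continuous T /\ dense (range T).

Definition pullback_triple (K : numFieldType) (H X E : normedModType K)
  (J : {linear X -> H}) (F : {linear X -> E}) (D : set H) (Y : H -> X) : Prop :=
  [/\ bounded_dense_range J, bounded_dense_range F, completion_operator D Y,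
      (forall u : X, `|u| ^+ 2 = `|J u| ^+ 2 + `|F u| ^+ 2) &
      (forall f, D f -> J (Y f) = f)].

Definition graph_on (A B : Type) (D : set A) (T : A -> B) : set (A * B) :=
  [set p | exists2 a, D a & p = (a, T a)].

Definition inv_graph_on (A B : Type) (D : set A) (T : A -> B) : set (B * A) :=
  [set p | exists2 a, D a & p = (T a, a)].

(* an operator given by its graph G is closable iff the closure of its graph is
   again the graph of an operator (i.e. is single-valued) *)
Definition closable (A B : topologicalType) (G : set (A * B)) : Prop :=
  forall a b1 b2, closure G (a, b1) -> closure G (a, b2) -> b1 = b2.

Definition bounded_on (K : numFieldType) (U V : normedModType K) (D : set U)
  (T : U -> V) : Prop := exists C : K, forall x, D x -> `|T x| <= C * `|x|.

Definition isomorphism (K : numFieldType) (U V : normedModType K)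
  (T : {linear U -> V}) : Prop :=
  continuous T /\
  exists S : {linear V -> U}, [/\ continuous S, cancel T S & cancel S T].

(* Main.v *)
Require Import Defs.
From HB Require Import structures.
From mathcomp Require Import all_boot all_order all_algebra.
From mathcomp Require Import all_classical all_reals all_analysis.
From mathcomp Require Import ring.
Import Order.TTheory GRing.Theory Num.Theory.
Import numFieldNormedType.Exports.
Local Open Scope classical_set_scope.
Local Open Scope ring_scope.

Section S.
Variables (K : numFieldType) (H X : normedModType K) (J : {linear X -> H})
  (D : set H) (Y : H -> X).
Hypotheses (Jc : continuous J) (dY : dense (Y @` D))
  (JY : forall f, D f -> J (Y f) = f).

Lemma cl_inv : closure (inv_graph_on D Y) = graph_on setT (fun u => J u).
Proof.
apply/seteqP; split.
- move=> [u h] cl; exists u => //; congr pair.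
  apply: norm_hausdorff => A B Ah BJu.
  have JB : nbhs u (J @^-1` B) := Jc u _ BJu.
  have [] := cl ((J @^-1` B) `*` A).
    by exists (J @^-1` B, A).
  move=> p [[f Df ->] [/= JBp Ap]]; exists f; split => //.
  by rewrite -(JY _ Df).
- move=> [u h] [u' _ [-> ->]] S [[U V] [/= Uu VJu] sUV].
  have JV : nbhs u' (J @^-1` V) := Jc u' _ VJu.
  have NN : nbhs u' (U `&` J @^-1` V)  by apply: filterI. 
  have oW := @open_interior _ (U `&` J @^-1` V).
  have sW := @interior_subset _ (U `&` J @^-1` V).
  have Wu : (U `&` J @^-1` V)° u' := NN.
  have [x [Wx [f Df fx]]] := dY _ (ex_intro _ u' Wu) oW.
  exists (Y f, f); split; first by exists f.
  apply: sUV; split => /=; have := sW _ Wx; rewrite -fx => -[//].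
  by rewrite /preimage /= JY.
Qed.

Lemma cl_graph : closure (graph_on D Y) = inv_graph_on setT (fun u => J u).
Proof.
apply/seteqP; split.
- move=> [h u] cl; exists u => //; congr pair.
  apply: norm_hausdorff => A B Ah BJu.
  have JB : nbhs u (J @^-1` B) := Jc u _ BJu.
  have [] := cl (A `*` (J @^-1` B)).
    by exists (A, J @^-1` B).
  move=> p [[f Df ->] [/= Ap JBp]]; exists f; split => //.
  by rewrite -(JY _ Df).
- move=> [h u] [u' _ [-> ->]] S [[V U] [/= VJu Uu] sUV].
  have JV : nbhs u' (J @^-1` V) := Jc u' _ VJu.
  have NN : nbhs u' (U `&` J @^-1` V)  by apply: filterI. 
  have oW := @open_interior _ (U `&` J @^-1` V).
  have sW := @interior_subset _ (U `&` J @^-1` V).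
  have Wu : (U `&` J @^-1` V)° u' := NN.
  have [x [Wx [f Df fx]]] := dY _ (ex_intro _ u' Wu) oW.
  exists (f, Y f); split; first by exists f.
  apply: sUV; split => /=; have := sW _ Wx; rewrite -fx => -[//].
  by rewrite /preimage /= JY.
Qed.
End S.
Lemma dense_cl (T : topologicalType) (A : set T) x : dense A -> closure A x.
Proof.
move=> dA B nB.
have [y [By Ay]] := dA (B°) (ex_intro _ x nB) (@open_interior _ B).
by exists y; split => //; exact: interior_subset.
Qed.

Section S2.
Variables (K : numFieldType) (H : normedModType K) (X : completeNormedModType K)
  (J : {linear X -> H}) (D : set H) (Y : H -> X).
Hypotheses (Jc : continuous J) (dY : dense (Y @` D))
  (JY : forall f, D f -> J (Y f) = f).
Variables (c : K) (c0 : 0 <= c) (bY : forall f, D f -> `|Y f| <= c * `|f|).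

Lemma est (u : X) : `|u| <= c * `|J u|.
Proof.
apply/ler_addgt0Pr => e e0.
have c1 : 0 < c + 1 by rewrite (le_lt_trans c0) // ltrDl ltr01.
pose d := e / (c + 1).
have d0 : 0 < d by rewrite divr_gt0.
have ed : e = d * (c + 1) by rewrite /d divfK // gt_eqF.
have N1 : nbhs u (ball u d) := nbhsx_ballx _ _ d0.
have N2 : nbhs u (J @^-1` ball (J u) d) := Jc u _ (nbhsx_ballx _ _ d0).
have NN : nbhs u (ball u d `&` J @^-1` ball (J u) d) by apply: filterI.
have [x [Wx [f Df fx]]] :=
  dY (ball u d `&` J @^-1` ball (J u) d)° (ex_intro _ u NN) (@open_interior _ _).
have [b1 b2] := interior_subset Wx.
rewrite -fx /preimage /= JY // in b1 b2.
rewrite -ball_normE /= in b1; rewrite -ball_normE /= in b2.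
have h1 := ler_normD (u - Y f) (Y f); rewrite subrK in h1.
have h2 := ler_normD (f - J u) (J u); rewrite subrK distrC in h2.
apply: (le_trans h1); apply: le_trans (lerD (ltW b1) (bY _ Df)) _.
have h3 : c * `|f| <= c * (d + `|J u|).
  by apply: (ler_wpM2l c0); apply: le_trans h2 _; rewrite lerD2r ltW.
apply: le_trans (lerD (le_refl d) h3) _.
have -> : d + c * (d + `|J u|) = c * `|J u| + e by rewrite ed; ring.
exact: lexx.
Qed.

Hypotheses (Dsub : is_subspace D) (Ylin : linear_on D Y) (dD : dense D).

Lemma surj (h : H) : exists u, J u = h.
Proof.
pose G := within D (nbhs h).
have clD : closure D h := dense_cl _ D h dD.
have PG : ProperFilter G := @within_nbhs_proper _ D h clD.
have cY : cauchy (Y @ G).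
  apply: cauchy_exP => eps eps0.
  have c1 : 0 < c + 1 by rewrite (le_lt_trans c0) // ltrDl ltr01.
  pose d := eps / (2 * (c + 1)).
  have d0 : 0 < d by rewrite divr_gt0 // mulr_gt0.
  have ed : eps = d * (2 * (c + 1)) by rewrite /d divfK // gt_eqF // mulr_gt0.
  have [f0 [Df0 bf0]] := clD (ball h d) (nbhsx_ballx _ _ d0).
  exists (Y f0).
  apply: filterS (nbhsx_ballx h d d0) => g bg Dg.
  rewrite -ball_normE /= in bf0 bg; rewrite -ball_normE /=.
  have Dg' : D ((-1) *: g + f0).
    by case: Dsub => _ Dadd Dscal; apply: Dadd => //; apply: Dscal.
  have -> : Y f0 - Y g = Y ((-1) *: g + f0).
    by rewrite Ylin //; case: Dsub => _ _ Dscal; rewrite scaleN1r addrC.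
  apply: le_lt_trans (bY _ Dg') _.
  have h1 := ler_normD (f0 - h) (h - g).
  rewrite addrA subrK in h1; rewrite distrC in bf0.
  rewrite scaleN1r addrC.
  apply: le_lt_trans (ler_wpM2l c0 (le_trans h1 (lerD (ltW bf0) (ltW bg)))) _.
  have -> : eps = c * (d + d) + (d + d) by rewrite ed; ring.
  by rewrite ltrDl addr_gt0.
have cv : cvg (Y @ G) by apply: cauchy_cvg.
exists (lim (Y @ G)).
have cJ : (J \o Y) @ G --> J (lim (Y @ G)) := cvg_comp Y J cv (Jc _).
have cI : (J \o Y) @ G --> h.
  move=> A nA /=; apply: filterS nA => x Ax Dx.
  by rewrite /= JY.
exact: (cvg_unique _ cJ cI).
Qed.
End S2.

Theorem mainTheorem3 (K : numClosedFieldType)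
  (H X E : completeNormedModType K)
  (ipH : H -> H -> K) (ipX : X -> X -> K) (ipE : E -> E -> K)
  (hH : is_hilbert ipH) (hX : is_hilbert ipX) (hE : is_hilbert ipE)
  (J : {linear X -> H}) (F : {linear X -> E}) (D : set H) (Y : H -> X)
  (hT : pullback_triple J F D Y) :
  (* (i) *)
  (closable (inv_graph_on D Y) /\
   closure (inv_graph_on D Y) = graph_on setT (fun u : X => J u)) /\
  (* (ii) *)
  (closable (graph_on D Y) <-> injective J) /\
  (injective J ->
   closure (graph_on D Y) = inv_graph_on setT (fun u : X => J u)) /\
  (* (iii) *)
  (bounded_on D Y <-> isomorphism J).
Proof.
case: hT => [[Jc dJ] _ [Dsub Ylin dD Yinj dY] _ JY].
have ci := @cl_inv _ _ _ J D Y Jc dY JY.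
have cg := @cl_graph _ _ _ J D Y Jc dY JY.
split.
  split; last exact: ci.
  move=> a b1 b2; rewrite ci => -[x _ [ax bx]] [y _ [ay by']].
  by rewrite bx by' -ax -ay.
split.
  split.
    move=> cl x y Jxy; apply: (cl (J x)); rewrite cg.
      by exists x.
    by exists y => //; rewrite Jxy.
  move=> Jinj a b1 b2; rewrite cg => -[x _ [ax bx]] [y _ [ay by']].
  by rewrite bx by'; apply: Jinj; rewrite -ax -ay.
split; first by move=> _; exact: cg.
split.
  move=> [C bC].
  have bY : forall f, D f -> `|Y f| <= `|C| * `|f|.
    move=> f Df; have hb := bC f Df.
    rewrite -[`|f|]normr_id -normrM ger0_norm //.
    exact: le_trans (normr_ge0 _) hb.
  have c0 : 0 <= `|C| by [].
  have es := @est _ _ _ J D Y Jc dY JY _ c0 bY.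
  have Jinj : injective J.
    move=> x y Jxy; apply/eqP; rewrite -subr_eq0 -normr_le0.
    apply: le_trans (es (x - y)) _.
    by rewrite linearB /= Jxy subrr normr0 mulr0.
  have [g gK] := @boolp.choice _ _ (fun h u => J u = h)
    (@surj _ _ _ J D Y Jc JY _ c0 bY Dsub Ylin dD).
  simpl in gK.
  have glin : linear g.
    by move=> a x y; apply: Jinj; rewrite linearP /= !gK.
  pose S : {linear H -> X} := HB.pack g (GRing.isLinear.Build _ _ _ _ _ glin).
  split; first exact: Jc.
  exists S; split.
  - apply: bounded_linear_continuous; apply/linear_boundedP.
    exists `|C|; split; first exact: normr_real.
    move=> M CM x /=.
    apply: le_trans (es (g x)) _; rewrite gK.
    by apply: ler_wpM2r => //; exact: ltW.
  - by move=> x /=; apply: Jinj; rewrite gK.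
  - by move=> x /=; rewrite gK.
move=> [_ [S [Sc JS SJ]]].
have := (linear_bounded_continuous S).2 Sc.
move=> /linear_boundedP [y [yreal fr]].
have bnd := fr (y + 1) ltac:(by rewrite ltrDl ltr01).
exists (y + 1) => f Df.
by rewrite -[Y f]JS JY //; exact: bnd.
Qed.
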